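(* Let $A=(a_n)_{n\ge1}$ and $B=(b_n)_{n\ge1}$ be decreasing sequences of positive real numbers converging to $0$, such that the difference sequences $(a_n-a_{n+1})_{n\ge1}$ and $(b_n-b_{n+1})_{n\ge1}$ are monotonically nonincreasing. If $a_n\le b_n$ for all $n$, then $\overline{\dim}_BA\le\overline{\dim}_BB$ and $\underline{\dim}_BA\le\underline{\dim}_BB$ (the sequences being identified with the sets of their terms).
   Context: For a bounded set $S\subset\mathbb{R}$ and $\varepsilon>0$, $S_\varepsilon=\{y: \mathrm{dist}(y,S)<\varepsilon\}$ and $|S_\varepsilon|$ is its Lebesgue measure. $\mathcal M^{*s}(S)=\limsup_{\varepsilon\to0}|S_\varepsilon|/\varepsilon^{1-s}$, $\mathcal M_*^{s}(S)=\liminf_{\varepsilon\to0}|S_\varepsilon|/\varepsilon^{1-s}$; $\overline{\dim}_BS=\inf\{s\ge0:\mathcal M^{*s}(S)=0\}$ and $\underline{\dim}_BS=\inf\{s\ge0:\mathcal M_*^{s}(S)=0\}$. *)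

(* Defs.v *)
From Stdlib Require Import Reals Lra ClassicalEpsilon.
Open Scope R_scope.

Definition is_inf (E : R -> Prop) (m : R) : Prop :=
  (forall x, E x -> m <= x) /\ (forall m', (forall x, E x -> m' <= x) -> m' <= m).

Definition cover_sums (U : R -> Prop) (x : R) : Prop :=
  exists a b : nat -> R,
    (forall n, a n <= b n) /\
    (forall y, U y -> exists n, a n < y < b n) /\
    infinite_sum (fun n => b n - a n) x.

(* Lebesgue (outer) measure of U; meaningful for bounded U. *)
Definition lmeasure (U : R -> Prop) : R :=
  epsilon (inhabits 0) (is_inf (cover_sums U)).

Definition nbhd (S : R -> Prop) (eps : R) : R -> Prop :=
  fun y => exists x, S x /\ Rabs (y - x) < eps.

Definition mink_ratio (S : R -> Prop) (s eps : R) : R :=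
  lmeasure (nbhd S eps) / Rpower eps (1 - s).

(* Upper Minkowski content M^{*s}(S) = limsup_{eps->0} ratio.
   Since the ratio is >= 0, M^{*s}(S) = 0 iff
   for all d > 0 there is eta > 0 with sup_{0<eps<eta} ratio <= d,
   i.e. ratio <= d for all 0 < eps < eta. *)
Definition upper_content_zero (S : R -> Prop) (s : R) : Prop :=
  forall d, 0 < d -> exists eta, 0 < eta /\
    forall eps, 0 < eps < eta -> mink_ratio S s eps <= d.

(* Lower Minkowski content M_*^s(S) = liminf_{eps->0} ratio = 0 iff
   for all d > 0 and eta > 0, inf_{0<eps<eta} ratio <= d ... i.e.
   there are eps arbitrarily small with ratio < d. *)
Definition lower_content_zero (S : R -> Prop) (s : R) : Prop :=
  forall d eta, 0 < d -> 0 < eta -> exists eps, 0 < eps < eta /\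
    mink_ratio S s eps < d.

Definition upper_box_dim (S : R -> Prop) : R :=
  epsilon (inhabits 0) (is_inf (fun s => 0 <= s /\ upper_content_zero S s)).

Definition lower_box_dim (S : R -> Prop) : R :=
  epsilon (inhabits 0) (is_inf (fun s => 0 <= s /\ lower_content_zero S s)).

Definition seq_set (a : nat -> R) : R -> Prop :=
  fun x => exists n, (1 <= n)%nat /\ x = a n.

Definition good_seq (a : nat -> R) : Prop :=
  (forall n, (1 <= n)%nat -> 0 < a n) /\
  (forall n, (1 <= n)%nat -> a (S n) < a n) /\
  (forall e, 0 < e -> exists N, forall n, (N <= n)%nat -> Rabs (a n) < e) /\
  (forall n, (1 <= n)%nat -> a (S n) - a (S (S n)) <= a n - a (S n)).

(* Main.v *)
Require Import Defs.
From Stdlib Require Import Reals Lra Lia ClassicalEpsilon Classical List Arith.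
Open Scope R_scope.

Lemma inf_exists (E : R -> Prop) : (exists x, E x) -> (forall x, E x -> 0 <= x) ->
  exists m, is_inf E m.
Proof.
  intros [x0 Hx0] Hpos.
  destruct (completeness (fun x => E (- x))) as [m [Hub Hl]].
  - exists 0. intros x Hx. specialize (Hpos _ Hx). lra.
  - exists (- x0). rewrite Ropp_involutive. exact Hx0.
  - exists (- m). split.
    + intros x Hx. assert (- x <= m). { apply Hub. rewrite Ropp_involutive. exact Hx. } lra.
    + intros m' Hm'. assert (m <= - m'). { apply Hl. intros x Hx. specialize (Hm' _ Hx). lra. } lra.
Qed.

Lemma cover_sums_nonneg U x : cover_sums U x -> 0 <= x.
Proof.
  intros [a [b [Hab [_ Hs]]]].
  assert (H := sum_incr (fun n => b n - a n) 0 x Hs).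
  simpl in H. assert (H0 := Hab 0%nat). apply Rle_trans with (b 0%nat - a 0%nat); [lra|].
  apply H. intros n; specialize (Hab n); lra.
Qed.

Lemma lmeasure_spec U x : cover_sums U x -> is_inf (cover_sums U) (lmeasure U).
Proof.
  intros Hx. unfold lmeasure. apply epsilon_spec.
  apply inf_exists. exists x; exact Hx. apply cover_sums_nonneg.
Qed.

Lemma inf_mono (E1 E2 : R -> Prop) : (forall x, E2 x -> E1 x) -> (exists x, E2 x) ->
  (forall x, E1 x -> 0 <= x) ->
  epsilon (inhabits 0) (is_inf E1) <= epsilon (inhabits 0) (is_inf E2).
Proof.
  intros Hsub [x Hx] Hpos.
  assert (H1 : is_inf E1 (epsilon (inhabits 0) (is_inf E1))).
  { apply epsilon_spec. apply inf_exists; eauto. }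
  assert (H2 : is_inf E2 (epsilon (inhabits 0) (is_inf E2))).
  { apply epsilon_spec. apply inf_exists; eauto. }
  destruct H1 as [H1a _]. destruct H2 as [_ H2b]. apply H2b. intros y Hy. apply H1a, Hsub, Hy.
Qed.

Lemma least (P : nat -> Prop) n : P n -> exists m, P m /\ (forall k, (k < m)%nat -> ~ P k).
Proof.
  induction n as [n IH] using lt_wf_ind. intros Hn.
  destruct (classic (exists k, (k < n)%nat /\ P k)) as [[k [Hk Pk]]|H].
  - apply (IH k Hk Pk).
  - exists n; split; auto. intros k Hk Pk; apply H; eauto.
Qed.

Definition lsum (L : list (R*R)) : R := fold_right (fun p s => snd p - fst p + s) 0 L.

Lemma lsum_app l1 l2 : lsum (l1 ++ l2) = lsum l1 + lsum l2.
Proof. induction l1; simpl; [lra|rewrite IHl1; lra]. Qed.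

Lemma lsum_nonneg L : (forall p, In p L -> fst p <= snd p) -> 0 <= lsum L.
Proof.
  induction L as [|p L IH]; simpl; intros H; [lra|].
  assert (fst p <= snd p) by (apply H; auto).
  assert (0 <= lsum L) by (apply IH; auto). lra.
Qed.

Lemma fin_cover_interval n : forall L, length L = n ->
  (forall p, In p L -> fst p <= snd p) -> forall c d, c <= d ->
  (forall y, c <= y <= d -> exists p, In p L /\ fst p < y < snd p) -> d - c <= lsum L.
Proof.
  induction n as [|n IH]; intros L Hlen Hv c d Hcd Hcov.
  - destruct L; [|discriminate]. destruct (Hcov d) as [p [[] _]]; lra.
  - destruct (Hcov d) as [p [Hp Hpd]]; [lra|].
    destruct (in_split p L Hp) as [l1 [l2 ->]].
    rewrite lsum_app. simpl.
    assert (H1 : 0 <= lsum l1) by (apply lsum_nonneg; intros q Hq; apply Hv; apply in_or_app; auto).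
    assert (H2 : 0 <= lsum l2) by (apply lsum_nonneg; intros q Hq; apply Hv; apply in_or_app; simpl; auto).
    destruct (Rlt_le_dec (fst p) c) as [Hlt|Hge].
    + lra.
    + assert (fst p - c <= lsum (l1 ++ l2)).
      { apply (IH (l1 ++ l2)).
        - rewrite length_app in *. simpl in Hlen. lia.
        - intros q Hq. apply Hv. apply in_app_or in Hq. apply in_or_app. simpl. tauto.
        - exact Hge.
        - intros y Hy. destruct (Hcov y) as [q [Hq Hqy]]; [lra|].
          exists q. split; [|exact Hqy].
          apply in_app_or in Hq. destruct Hq as [Hq|[Hq|Hq]].
          + apply in_or_app; auto.
          + subst q. lra.
          + apply in_or_app; auto. }
      rewrite lsum_app in H. lra.
Qed.

Definition lft (p : R) (L : list (R*R)) := map (fun q => (Rmin (fst q) p, Rmin (snd q) p)) L.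
Definition rgt (p : R) (L : list (R*R)) := map (fun q => (Rmax (fst q) p, Rmax (snd q) p)) L.

Lemma lsum_split p L : lsum (lft p L) + lsum (rgt p L) = lsum L.
Proof.
  induction L as [|q L IH]; simpl; [lra|].
  unfold lft, rgt in *. simpl. rewrite <- IH.
  unfold Rmin, Rmax; destruct (Rle_dec (fst q) p); destruct (Rle_dec (snd q) p); simpl; lra.
Qed.

Lemma d_mono (c d : nat -> R) m : (forall j, c j <= d j) -> (forall j, (j < m)%nat -> d j < c (S j)) ->
  forall j, (j <= m)%nat -> d j <= d m.
Proof.
  intros Hcd Hsep j Hj. induction m as [|m IH].
  - replace j with 0%nat by lia. lra.
  - destruct (Nat.eq_dec j (S m)) as [->|Hne]; [lra|].
    assert (d j <= d m) by (apply IH; [intros; apply Hsep; lia | lia]).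
    assert (d m < c (S m)) by (apply Hsep; lia). specialize (Hcd (S m)). lra.
Qed.

Lemma multi_cover (c d : nat -> R) : (forall j, c j <= d j) -> forall m,
  (forall j, (j < m)%nat -> d j < c (S j)) -> forall L,
  (forall p, In p L -> fst p <= snd p) ->
  (forall j y, (j <= m)%nat -> c j <= y <= d j -> exists q, In q L /\ fst q < y < snd q) ->
  sum_f_R0 (fun j => d j - c j) m <= lsum L.
Proof.
  intros Hcd m. induction m as [|m IH]; intros Hsep L Hv Hcov.
  - simpl. apply (fin_cover_interval (length L)); auto.
    intros y Hy. apply (Hcov 0%nat); auto.
  - simpl. rewrite <- (lsum_split ((d m + c (S m)) / 2) L).
    set (p := (d m + c (S m)) / 2).
    assert (Hdm : d m < c (S m)) by (apply Hsep; lia).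
    assert (Hl : sum_f_R0 (fun j => d j - c j) m <= lsum (lft p L)).
    { apply IH.
      - intros; apply Hsep; lia.
      - intros q Hq. unfold lft in Hq. apply in_map_iff in Hq. destruct Hq as [q' [<- Hq']].
        simpl. specialize (Hv q' Hq'). unfold Rmin; destruct (Rle_dec (fst q') p); destruct (Rle_dec (snd q') p); lra.
      - intros j y Hj Hy.
        assert (d j <= d m) by (apply (d_mono c d m); auto; intros; apply Hsep; lia).
        destruct (Hcov j y) as [q [Hq Hqy]]; [lia|auto|].
        exists (Rmin (fst q) p, Rmin (snd q) p). split.
        + unfold lft. apply in_map_iff. exists q; auto.
        + simpl. unfold p in *. unfold Rmin; destruct (Rle_dec (fst q) _); destruct (Rle_dec (snd q) _); lra. }
    assert (Hr : d (S m) - c (S m) <= lsum (rgt p L)).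
    { apply (fin_cover_interval (length (rgt p L))); auto.
      - intros q Hq. unfold rgt in Hq. apply in_map_iff in Hq. destruct Hq as [q' [<- Hq']].
        simpl. specialize (Hv q' Hq'). unfold Rmax; destruct (Rle_dec (fst q') p); destruct (Rle_dec (snd q') p); lra.
      - intros y Hy.
        destruct (Hcov (S m) y) as [q [Hq Hqy]]; [lia|auto|].
        exists (Rmax (fst q) p, Rmax (snd q) p). split.
        + unfold rgt. apply in_map_iff. exists q; auto.
        + simpl. unfold p in *. unfold Rmax; destruct (Rle_dec (fst q) _); destruct (Rle_dec (snd q) _); lra. }
    lra.
Qed.

Lemma nat_list_bound (l : list R) : (forall r, In r l -> exists n, r = INR n) ->
  exists K, forall r n, In r l -> r = INR n -> (n <= K)%nat.
Proof.
  induction l as [|r l IH]; intros H.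
  - exists 0%nat. intros r n [].
  - destruct IH as [K HK]. { intros; apply H; simpl; auto. }
    destruct (H r) as [n0 Hn0]; [simpl; auto|].
    exists (Nat.max K n0). intros r' n [Hr|Hr] Hrn.
    + subst. apply INR_eq in Hrn. lia.
    + specialize (HK r' n Hr Hrn). lia.
Qed.

Lemma hb (a b : nat -> R) c d : c <= d -> (forall y, c <= y <= d -> exists n, a n < y < b n) ->
  exists K, forall y, c <= y <= d -> exists n, (n <= K)%nat /\ a n < y < b n.
Proof.
  intros Hcd Hcov.
  set (fam := fun r y => exists n, r = INR n /\ a n < y < b n).
  assert (Hcf : forall r, (exists y, fam r y) -> (fun r => exists n:nat, r = INR n) r).
  { intros r [y [n [Hn _]]]. exists n; auto. }
  set (F := mkfamily (fun r => exists n:nat, r = INR n) fam Hcf).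
  destruct (compact_P3 c d F) as [D [HDc [l Hl]]].
  - split.
    + intros y Hy. destruct (Hcov y Hy) as [n Hn]. exists (INR n). simpl. exists n; auto.
    + intros r y [n [Hr Hy]].
      assert (Hpos : 0 < Rmin (y - a n) (b n - y)) by (apply Rmin_pos; lra).
      exists (mkposreal _ Hpos). intros z Hz. unfold disc in Hz. simpl in Hz.
      apply Rabs_def2 in Hz. assert (Rmin (y - a n) (b n - y) <= y - a n) by apply Rmin_l.
      assert (Rmin (y - a n) (b n - y) <= b n - y) by apply Rmin_r.
      exists n. split; auto. lra.
  - destruct (nat_list_bound l) as [K HK].
    { intros r Hr. apply Hl in Hr. destruct Hr as [Hr _]. exact Hr. }
    exists K. intros y Hy. destruct (HDc y Hy) as [r [[n [Hrn Hn]] HDr]].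
    exists n. split; auto. apply (HK r n); auto. apply Hl. split; auto. exists n; auto.
Qed.

Lemma lsum_seq (a b : nat -> R) K :
  lsum (map (fun n => (a n, b n)) (seq 0 (S K))) = sum_f_R0 (fun n => b n - a n) K.
Proof.
  induction K as [|K IH]; [simpl; lra|].
  rewrite seq_S, map_app, lsum_app, IH. simpl. lra.
Qed.

Lemma cover_lower (c d : nat -> R) m U x : (forall j, c j <= d j) ->
  (forall j, (j < m)%nat -> d j < c (S j)) ->
  (forall j y, (j <= m)%nat -> c j <= y <= d j -> U y) ->
  cover_sums U x -> sum_f_R0 (fun j => d j - c j) m <= x.
Proof.
  intros Hcd Hsep HU [a [b [Hab [Hcov Hs]]]].
  assert (HK : forall m', (m' <= m)%nat -> exists K, forall j y, (j <= m')%nat -> c j <= y <= d j ->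
     exists n, (n <= K)%nat /\ a n < y < b n).
  { induction m' as [|m' IH]; intros Hm'.
    - destruct (hb a b (c 0%nat) (d 0%nat)) as [K HK]; auto.
      + intros y Hy. apply Hcov. apply (HU 0%nat); auto; lia.
      + exists K. intros j y Hj Hy. replace j with 0%nat in * by lia. auto.
    - destruct IH as [K1 HK1]; [lia|].
      destruct (hb a b (c (S m')) (d (S m'))) as [K2 HK2]; auto.
      + intros y Hy. apply Hcov. apply (HU (S m')); auto.
      + exists (Nat.max K1 K2). intros j y Hj Hy.
        destruct (Nat.eq_dec j (S m')) as [->|Hne].
        * destruct (HK2 y Hy) as [n [Hn Hy']]. exists n; split; auto; lia.
        * destruct (HK1 j y) as [n [Hn Hy']]; auto; [lia|]. exists n; split; auto; lia. }
  destruct (HK m (le_n m)) as [K HK'].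
  apply Rle_trans with (lsum (map (fun n => (a n, b n)) (seq 0 (S K)))).
  - apply multi_cover; auto.
    + intros p Hp. apply in_map_iff in Hp. destruct Hp as [n [<- _]]. simpl. auto.
    + intros j y Hj Hy. destruct (HK' j y Hj Hy) as [n [Hn Hy']].
      exists (a n, b n). split; auto. apply in_map_iff. exists n; split; auto.
      apply in_seq. lia.
  - rewrite lsum_seq. apply sum_incr; [exact Hs|]. intros n; specialize (Hab n); lra.
Qed.

Lemma good_dec a : good_seq a -> forall M n, (1 <= M)%nat -> (M <= n)%nat -> a n <= a M.
Proof.
  intros [Hp [Hd _]] M n HM Hn. induction Hn as [|n Hn IH]; [lra|].
  assert (a (S n) < a n) by (apply Hd; lia). lra.
Qed.

Lemma sum_trunc (f : nat -> R) K : (forall n, (K < n)%nat -> f n = 0) ->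
  infinite_sum f (sum_f_R0 f K).
Proof.
  intros Hf eps Heps. exists K. intros n Hn.
  assert (sum_f_R0 f n = sum_f_R0 f K).
  { induction Hn as [|n Hn IH]; auto. simpl. rewrite IH, Hf; [lra|lia]. }
  rewrite H. unfold R_dist. rewrite Rminus_diag, Rabs_R0. lra.
Qed.

Lemma upper_cover a M eps : good_seq a -> (1 <= M)%nat -> 0 < eps ->
  cover_sums (nbhd (seq_set a) eps) (a M + 2 * eps * INR M).
Proof.
  intros Ha HM Heps.
  set (lo := fun n : nat => match n with O => - eps | _ => if (n <? M)%nat then a n - eps else 0 end).
  set (hi := fun n : nat => match n with O => a M + eps | _ => if (n <? M)%nat then a n + eps else 0 end).
  exists lo, hi. split; [|split].
  - intros [|n]; unfold lo, hi.
    + destruct Ha as [Hp _]. specialize (Hp M HM). lra.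
    + destruct (S n <? M)%nat; lra.
  - intros y [x [[n [Hn ->]] Hy]]. apply Rabs_def2 in Hy.
    destruct (lt_dec n M) as [Hlt|Hge].
    + exists n. unfold lo, hi. destruct n as [|n']; [lia|].
      replace (S n' <? M)%nat with true by (symmetry; apply Nat.ltb_lt; lia). lra.
    + exists 0%nat. unfold lo, hi.
      assert (a n <= a M) by (apply (good_dec a Ha); lia).
      destruct Ha as [Hp _]. specialize (Hp n Hn). lra.
  - assert (Hf : forall k, (k <= M - 1)%nat -> sum_f_R0 (fun n => hi n - lo n) k = a M + 2 * eps + 2 * eps * INR k).
    { induction k as [|k IH]; intros Hk.
      - simpl. unfold hi, lo. simpl. lra.
      - rewrite tech5. rewrite IH by lia. unfold hi, lo.
        replace (S k <? M)%nat with true by (symmetry; apply Nat.ltb_lt; lia).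
        rewrite S_INR. lra. }
    replace (a M + 2 * eps * INR M) with (sum_f_R0 (fun n => hi n - lo n) (M - 1)).
    + apply sum_trunc. intros n Hn. unfold hi, lo. destruct n as [|n]; [lia|].
      replace (S n <? M)%nat with false by (symmetry; apply Nat.ltb_ge; lia). lra.
    + rewrite Hf by lia. rewrite minus_INR by lia. simpl. lra.
Qed.

Lemma gaps_after b M eps : good_seq b -> (1 <= M)%nat -> b M - b (S M) < 2 * eps ->
  forall n, (M <= n)%nat -> b n - b (S n) < 2 * eps.
Proof.
  intros [_ [_ [_ Hg]]] HM HgM n Hn. induction Hn as [|n Hn IH]; auto.
  assert (b (S n) - b (S (S n)) <= b n - b (S n)) by (apply Hg; lia). lra.
Qed.

Lemma chunk b M eps : good_seq b -> (1 <= M)%nat -> 0 < eps ->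
  (forall n, (M <= n)%nat -> b n - b (S n) < 2 * eps) ->
  forall y, - eps < y < b M + eps -> nbhd (seq_set b) eps y.
Proof.
  intros Hb HM Heps Hgap y Hy.
  destruct (Rle_lt_dec (b M) y) as [H1|H1].
  { exists (b M). split. exists M; auto. apply Rabs_def1; lra. }
  destruct (Rle_lt_dec y 0) as [H2|H2].
  { destruct Hb as [Hp [_ [Hl _]]]. destruct (Hl (y + eps)) as [N HN]; [lra|].
    set (n := Nat.max N 1). assert (Hn := HN n ltac:(lia)). assert (Hpn := Hp n ltac:(lia)).
    rewrite Rabs_right in Hn by lra.
    exists (b n). split. exists n; split; auto; lia. apply Rabs_def1; lra. }
  pose proof Hb as [Hp [Hd [Hl Hg]]].
  destruct (Hl y H2) as [N HN].
  set (k0 := Nat.max N M).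
  assert (Pk0 : (M <= k0)%nat /\ b k0 < y).
  { split; [lia|]. assert (H := HN k0 ltac:(lia)). apply Rabs_def2 in H. lra. }
  destruct (least (fun k => (M <= k)%nat /\ b k < y) k0 Pk0) as [k [[Hk1 Hk2] Hmin]].
  destruct k as [|n]; [lia|].
  destruct (Nat.eq_dec (S n) M) as [He|Hne]; [subst M; lra|].
  assert (Hbn : y <= b n).
  { destruct (Rle_lt_dec y (b n)) as [?|Hlt]; auto. exfalso. apply (Hmin n); [lia|]. split; [lia|auto]. }
  assert (Hgn := Hgap n ltac:(lia)).
  destruct (Rlt_le_dec (y - b (S n)) eps) as [H3|H3].
  - exists (b (S n)). split. exists (S n); split; auto; lia. apply Rabs_def1; lra.
  - exists (b n). split. exists n; split; auto; lia. apply Rabs_def1; lra.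
Qed.

Lemma lower_delta b m eps delta : good_seq b -> 0 < delta < eps ->
  (forall k, (1 <= k)%nat -> (k < S m)%nat -> 2 * eps <= b k - b (S k)) ->
  b (S m) - b (S (S m)) < 2 * eps ->
  b (S m) + 2 * eps * INR (S m) - 2 * delta * INR (S m) <= lmeasure (nbhd (seq_set b) eps).
Proof.
  intros Hb Hdel Hmin HgM.
  set (c := fun j : nat => match j with O => - eps + delta | S i => b (m - i)%nat - eps + delta end).
  set (d := fun j : nat => match j with O => b (S m) + eps - delta | S i => b (m - i)%nat + eps - delta end).
  assert (Hsum : forall k, sum_f_R0 (fun j => d j - c j) k = b (S m) + 2 * eps - 2 * delta + INR k * (2 * eps - 2 * delta)).
  { induction k as [|k IH]; [simpl; lra|]. rewrite tech5, IH, S_INR. simpl. lra. }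
  destruct (lmeasure_spec (nbhd (seq_set b) eps) _ (upper_cover b 1 eps Hb (le_n 1) ltac:(lra))) as [_ Hinf].
  apply Hinf. intros x Hx.
  assert (H := cover_lower c d m (nbhd (seq_set b) eps) x).
  rewrite Hsum in H. rewrite S_INR. pose proof Hb as [Hp _].
  assert (b (S m) > 0) by (apply Hp; lia).
  enough (INR m * (2 * eps - 2 * delta) + (b (S m) + 2 * eps - 2 * delta) <= x) by lra.
  rewrite Rplus_comm. apply H; auto.
  - intros [|j]; unfold c, d; lra.
  - intros [|j] Hj; unfold c, d.
    + replace (m - 0)%nat with m by lia. assert (H1 := Hmin m ltac:(lia) ltac:(lia)). lra.
    + replace (m - j)%nat with (S (m - S j)) by lia.
      assert (H1 := Hmin (m - S j)%nat ltac:(lia) ltac:(lia)). lra.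
  - intros [|j] y Hj Hy; unfold c, d in Hy.
    + apply (chunk b (S m) eps Hb); try lia; try lra.
      apply gaps_after; auto. lia.
    + exists (b (m - j)%nat). split. exists (m - j)%nat; split; auto; lia.
      apply Rabs_def1; lra.
Qed.

Lemma lower_bound b eps : good_seq b -> 0 < eps -> exists M, (1 <= M)%nat /\
  b M + 2 * eps * INR M <= lmeasure (nbhd (seq_set b) eps).
Proof.
  intros Hb Heps.
  pose proof Hb as [Hp [Hd [Hl Hg]]].
  destruct (Hl (2 * eps)) as [N HN]; [lra|].
  set (n0 := Nat.max N 1).
  assert (P0 : (1 <= n0)%nat /\ b n0 - b (S n0) < 2 * eps).
  { split; [lia|]. assert (H := HN n0 ltac:(lia)). apply Rabs_def2 in H.
    assert (b (S n0) > 0) by (apply Hp; lia). lra. }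
  destruct (least (fun n => (1 <= n)%nat /\ b n - b (S n) < 2 * eps) n0 P0) as [M [[HM1 HM2] Hmin]].
  exists M. split; auto. destruct M as [|m]; [lia|].
  assert (Hmin' : forall k, (1 <= k)%nat -> (k < S m)%nat -> 2 * eps <= b k - b (S k)).
  { intros k Hk1 Hk2. destruct (Rle_lt_dec (2 * eps) (b k - b (S k))) as [?|Hlt]; auto.
    exfalso. apply (Hmin k Hk2). auto. }
  set (lm := lmeasure (nbhd (seq_set b) eps)).
  destruct (Rle_lt_dec (b (S m) + 2 * eps * INR (S m)) lm) as [?|Hlt]; auto.
  exfalso.
  set (g := b (S m) + 2 * eps * INR (S m) - lm).
  assert (HM : 0 < INR (S m)) by (apply lt_0_INR; lia).
  set (delta := Rmin (eps / 2) (g / (4 * INR (S m)))).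
  assert (Hd1 : delta <= eps / 2) by apply Rmin_l.
  assert (Hd2 : delta <= g / (4 * INR (S m))) by apply Rmin_r.
  assert (Hdp : 0 < delta) by (apply Rmin_pos; [lra| apply Rdiv_lt_0_compat; unfold g; lra]).
  assert (Hdm : delta * INR (S m) <= g / 4).
  { apply Rmult_le_compat_r with (r := INR (S m)) in Hd2; [|lra].
    replace (g / (4 * INR (S m)) * INR (S m)) with (g / 4) in Hd2 by (field; lra). exact Hd2. }
  assert (H := lower_delta b m eps delta Hb ltac:(lra) Hmin' HM2).
  fold lm in H. unfold g in Hdm. lra.
Qed.

Lemma lm_le a b eps : good_seq a -> good_seq b -> (forall n, (1 <= n)%nat -> a n <= b n) -> 0 < eps ->
  lmeasure (nbhd (seq_set a) eps) <= lmeasure (nbhd (seq_set b) eps).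
Proof.
  intros Ha Hb Hab Heps.
  destruct (lower_bound b eps Hb Heps) as [M [HM HB]].
  destruct (lmeasure_spec _ _ (upper_cover a M eps Ha HM Heps)) as [HA _].
  assert (H := HA _ (upper_cover a M eps Ha HM Heps)).
  assert (a M <= b M) by auto. lra.
Qed.

Lemma ratio_le a b s eps : good_seq a -> good_seq b -> (forall n, (1 <= n)%nat -> a n <= b n) -> 0 < eps ->
  mink_ratio (seq_set a) s eps <= mink_ratio (seq_set b) s eps.
Proof.
  intros. unfold mink_ratio, Rdiv. apply Rmult_le_compat_r.
  - left. apply Rinv_0_lt_compat. unfold Rpower. apply exp_pos.
  - apply lm_le; auto.
Qed.

Lemma ucz2 b : good_seq b -> upper_content_zero (seq_set b) 2.
Proof.
  intros Hb d Hd. pose proof Hb as [Hp _]. assert (H1 : 0 < b 1%nat) by (apply Hp; lia).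
  exists (Rmin 1 (d / (b 1%nat + 2))). split.
  { apply Rmin_pos; [lra|]. apply Rdiv_lt_0_compat; lra. }
  intros eps [He1 He2].
  assert (Hm1 : Rmin 1 (d / (b 1%nat + 2)) <= 1) by apply Rmin_l.
  assert (Hm2 : Rmin 1 (d / (b 1%nat + 2)) <= d / (b 1%nat + 2)) by apply Rmin_r.
  destruct (lmeasure_spec _ _ (upper_cover b 1 eps Hb (le_n 1) He1)) as [HA _].
  assert (H := HA _ (upper_cover b 1 eps Hb (le_n 1) He1)). simpl INR in H.
  unfold mink_ratio. replace (1 - 2) with (- (1)) by ring.
  rewrite Rpower_Ropp, Rpower_1 by lra.
  replace (lmeasure (nbhd (seq_set b) eps) / / eps) with (lmeasure (nbhd (seq_set b) eps) * eps) by (field; lra).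
  apply Rle_trans with ((b 1%nat + 2) * eps).
  - apply Rle_trans with ((b 1%nat + 2 * eps * 1) * eps).
    + apply Rmult_le_compat_r; lra.
    + apply Rmult_le_compat_r; lra.
  - assert (eps < d / (b 1%nat + 2)) by lra.
    apply Rmult_lt_compat_l with (r := b 1%nat + 2) in H0; [|lra].
    replace ((b 1%nat + 2) * (d / (b 1%nat + 2))) with d in H0 by (field; lra). lra.
Qed.

Lemma u_to_l S s : upper_content_zero S s -> lower_content_zero S s.
Proof.
  intros H d eta Hd Heta. destruct (H (d / 2)) as [e [He He']]; [lra|].
  exists (Rmin eta e / 2). assert (0 < Rmin eta e) by (apply Rmin_pos; lra).
  assert (Rmin eta e <= eta) by apply Rmin_l. assert (Rmin eta e <= e) by apply Rmin_r.
  split; [lra|]. assert (mink_ratio S s (Rmin eta e / 2) <= d / 2) by (apply He'; lra). lra.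
Qed.

Theorem lemma2 (a b : nat -> R) :
  good_seq a -> good_seq b ->
  (forall n, (1 <= n)%nat -> a n <= b n) ->
  upper_box_dim (seq_set a) <= upper_box_dim (seq_set b) /\
  lower_box_dim (seq_set a) <= lower_box_dim (seq_set b).
Proof.
  intros Ha Hb Hab. split.
  - unfold upper_box_dim. apply inf_mono.
    + intros s [Hs Hz]. split; auto. intros d Hd. destruct (Hz d Hd) as [eta [Heta He]].
      exists eta. split; auto. intros eps Heps.
      apply Rle_trans with (mink_ratio (seq_set b) s eps); [apply ratio_le; auto; lra|auto].
    + exists 2. split; [lra|apply ucz2; auto].
    + intros x [Hx _]; exact Hx.
  - unfold lower_box_dim. apply inf_mono.
    + intros s [Hs Hz]. split; auto. intros d eta Hd Heta. destruct (Hz d eta Hd Heta) as [eps [Heps He]].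
      exists eps. split; auto.
      apply Rle_lt_trans with (mink_ratio (seq_set b) s eps); [apply ratio_le; auto; lra|auto].
    + exists 2. split; [lra|apply u_to_l, ucz2; auto].
    + intros x [Hx _]; exact Hx.
Qed.
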